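(* Let $\mathcal P$ be an uncertain point set in $\mathbb R^2$ with $\min_{x\in\mathbb R^2}\widehat{\mathrm{cost}}(x)>0$, let $\varepsilon\in(0,1]$, let $\varrho>0$, and let $T(\mathcal P)$ be the output of any run of the greedy covering procedure on $S(\mathcal P)$. Then $$|T(\mathcal P)|\le 3540\,|T^*(\mathcal P)|,$$ where $T^*(\mathcal P)$ is a minimum-cardinality set $T\subset\mathbb R^2$ that $\frac{\varepsilon}{2(1+\varepsilon)}$-covers $S(\mathcal P)$.
   Context: Each $P_i$ ($i=1,\dots,n$) has $k$ locations $p_{i,1},\dots,p_{i,k}\in\mathbb R^2$; $P_{\mathrm{all}}$ is the set of all locations and $CH(P_{\mathrm{all}})$ its convex hull. $\widehat{\mathrm{cost}}(x)=\frac1n\sum_i\min_j\|x-p_{i,j}\|$ (Euclidean norm). A point $a$ $\gamma$-covers a point $b$ if $\|a-b\|\le\gamma\,\widehat{\mathrm{cost}}(a)$; a set $A$ $\gamma$-covers a set $B$ if every $b\in B$ is $\gamma$-covered by some $a\in A$. $S(\mathcal P)=CH(P_{\mathrm{all}})\cap\{(\beta i,\beta j): i,j\in\mathbb Z\}$ with $\beta=\frac{\varepsilon}{2\sqrt2(1+\varepsilon)}\varrho$ (in the paper $\varrho$ is a positive lower bound on $\widehat{\mathrm{cost}}$). Greedy covering procedure: start with $S=S(\mathcal P)$ and $T=\emptyset$; while $S\ne\emptyset$, choose any $z\in S$, add $z$ to $T$, and remove from $S$ every $s$ that $z$ $\frac{\varepsilon}{2(1+\varepsilon)}$-covers; output $T$.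 *)

(* Defs.v *)
From Stdlib Require Import Reals Lra List.
Import ListNotations.
Open Scope R_scope.

Definition pt : Type := (R * R)%type.

Definition dist2 (a b : pt) : R :=
  sqrt ((fst a - fst b) ^ 2 + (snd a - snd b) ^ 2).

Definition sumR (m : nat) (f : nat -> R) : R :=
  fold_right Rplus 0 (map f (seq 0 m)).

(* min_{j<k} ||x - p_{i,j}||  (meaningful for k >= 1) *)
Definition min_dist (k : nat) (p : nat -> nat -> pt) (i : nat) (x : pt) : R :=
  fold_right Rmin (dist2 x (p i 0%nat)) (map (fun j => dist2 x (p i j)) (seq 0 k)).

Definition cost (n k : nat) (p : nat -> nat -> pt) (x : pt) : R :=
  / INR n * sumR n (fun i => min_dist k p i x).

(* q lies in the convex hull of P_all = { p i j | i < n, j < k } *)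
Definition in_hull (n k : nat) (p : nat -> nat -> pt) (q : pt) : Prop :=
  exists w : nat -> nat -> R,
    (forall i j, 0 <= w i j) /\
    sumR n (fun i => sumR k (fun j => w i j)) = 1 /\
    sumR n (fun i => sumR k (fun j => w i j * fst (p i j))) = fst q /\
    sumR n (fun i => sumR k (fun j => w i j * snd (p i j))) = snd q.

Definition covers (n k : nat) (p : nat -> nat -> pt) (gamma : R) (a b : pt) : Prop :=
  dist2 a b <= gamma * cost n k p a.

Definition beta (eps rho : R) : R := eps / (2 * sqrt 2 * (1 + eps)) * rho.

Definition gam (eps : R) : R := eps / (2 * (1 + eps)).

Definition S_grid (n k : nat) (p : nat -> nat -> pt) (eps rho : R) (s : pt) : Prop :=
  in_hull n k p s /\
  exists a b : Z, s = (beta eps rho * IZR a, beta eps rho * IZR b).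

(* greedy_run cov S T : T is the output of some run of the greedy procedure
   started with the (remaining) set S, where cov z s means "z covers s". *)
Inductive greedy_run (cov : pt -> pt -> Prop) : (pt -> Prop) -> list pt -> Prop :=
| greedy_done : forall S : pt -> Prop,
    (forall s, ~ S s) -> greedy_run cov S []
| greedy_step : forall (S : pt -> Prop) (z : pt) (T : list pt),
    S z ->
    greedy_run cov (fun s => S s /\ ~ cov z s) T ->
    greedy_run cov S (z :: T).

(* Main.v *)
Require Import Defs.
From Stdlib Require Import Reals List Lra Lia ZArith.
Import ListNotations.
Open Scope R_scope.

Lemma d2_ge0 a b : 0 <= dist2 a b.
Proof. unfold dist2; apply sqrt_pos. Qed.

Lemma d2_sq a b : dist2 a b * dist2 a b = (fst a - fst b)^2 + (snd a - snd b)^2.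
Proof. unfold dist2; apply sqrt_sqrt.
  pose proof (pow2_ge_0 (fst a - fst b)); pose proof (pow2_ge_0 (snd a - snd b)); lra. Qed.

Lemma d2_sym a b : dist2 a b = dist2 b a.
Proof. unfold dist2; f_equal; ring. Qed.

Lemma d2_tri a b c : dist2 a b <= dist2 a c + dist2 c b.
Proof.
  assert (E : forall x y, dist2 x y = Rgeom.dist_euc (fst x) (snd x) (fst y) (snd y)).
  { intros; unfold dist2, Rgeom.dist_euc, Rsqr; f_equal; ring. }
  rewrite !E; apply Rgeom.triangle.
Qed.

Lemma fold_min_le (f g : nat -> R) d (l : list nat) :
  (forall j, f j <= g j + d) ->
  fold_right Rmin (f 0%nat) (map f l) <= fold_right Rmin (g 0%nat) (map g l) + d.
Proof.
  intro H; induction l as [|a l IH]; simpl; [apply H|].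
  specialize (H a). revert IH.
  generalize (fold_right Rmin (f 0%nat) (map f l)) (fold_right Rmin (g 0%nat) (map g l)).
  intros X Y IH. unfold Rmin.
  destruct (Rle_dec (f a) X); destruct (Rle_dec (g a) Y); lra.
Qed.

Lemma fold_sum_le (f g : nat -> R) d (l : list nat) :
  (forall j, f j <= g j + d) ->
  fold_right Rplus 0 (map f l) <= fold_right Rplus 0 (map g l) + INR (length l) * d.
Proof.
  intro H; induction l as [|a l IH]; cbn [map fold_right length]; [simpl; lra|].
  rewrite S_INR. specialize (H a). lra.
Qed.

Lemma cost_lip n k p t z : cost n k p t <= cost n k p z + dist2 z t.
Proof.
  destruct n as [|n].
  { unfold cost, sumR; simpl. pose proof (d2_ge0 z t). lra. }
  unfold cost, sumR.
  assert (H := fold_sum_le (fun i => min_dist k p i t) (fun i => min_dist k p i z)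
                 (dist2 z t) (seq 0 (S n))).
  rewrite length_seq in H.
  assert (Hn : 0 < INR (S n)) by (apply lt_0_INR; lia).
  assert (Hi : 0 < / INR (S n)) by (apply Rinv_0_lt_compat; lra).
  assert (H' : fold_right Rplus 0 (map (fun i => min_dist k p i t) (seq 0 (S n))) <=
          fold_right Rplus 0 (map (fun i => min_dist k p i z) (seq 0 (S n))) + INR (S n) * dist2 z t).
  { apply H. intro i. unfold min_dist.
    apply (fold_min_le (fun j => dist2 t (p i j)) (fun j => dist2 z (p i j))). intro j.
    pose proof (d2_tri t (p i j) z). rewrite (d2_sym t z) in H0. lra. }
  apply Rmult_le_compat_l with (r := / INR (S n)) in H'; [|lra].
  rewrite Rmult_plus_distr_l in H'.
  replace (/ INR (S n) * (INR (S n) * dist2 z t)) with (dist2 z t) in H'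
    by (field; lra).
  exact H'.
Qed.

Lemma FOP_weaken {A} (P : A -> Prop) (R R' : A -> A -> Prop) l :
  (forall a b, P a -> P b -> R a b -> R' a b) ->
  Forall P l -> ForallOrdPairs R l -> ForallOrdPairs R' l.
Proof.
  intros H HP HF; induction HF as [|a l Ha HF IH]; constructor.
  - inversion HP; subst. rewrite Forall_forall in *. intros x Hx.
    apply H; auto.
  - inversion HP; auto.
Qed.

Lemma FOP_filter {A} (R : A -> A -> Prop) f l :
  ForallOrdPairs R l -> ForallOrdPairs R (filter f l).
Proof.
  intro HF; induction HF as [|a l Ha HF IH]; simpl; [constructor|].
  destruct (f a); auto. constructor; auto.
  rewrite Forall_forall in *. intros x Hx. apply filter_In in Hx. apply Ha; tauto.
Qed.

Lemma nodup_map {A B} (c : A -> B) l :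
  ForallOrdPairs (fun a b => c a <> c b) l -> NoDup (map c l).
Proof.
  intro HF; induction HF as [|a l Ha HF IH]; simpl; constructor; auto.
  intro Hin. apply in_map_iff in Hin. destruct Hin as [x [Hx Hin]].
  rewrite Forall_forall in Ha. apply (Ha x Hin); auto.
Qed.

Lemma up_range u : -3 < u < 3 -> (-2 <= up u <= 3)%Z.
Proof.
  intro H. destruct (archimed u) as [H1 H2].
  assert (A : (-3 < up u)%Z) by (apply lt_IZR; simpl; lra).
  assert (B : (up u < 4)%Z) by (apply lt_IZR; simpl; lra).
  lia.
Qed.

Lemma up_close u v : up u = up v -> -1 < u - v < 1.
Proof.
  intro E. destruct (archimed u) as [H1 H2]. destruct (archimed v) as [H3 H4].
  rewrite E in H1, H2. lra.
Qed.

Section Pack.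
Variable C : pt -> R.
Variable g : R.
Hypothesis Cpos : forall x, 0 < C x.
Hypothesis Clip : forall t z, C t <= C z + dist2 z t.
Hypothesis gpos : 0 < g <= 1/4.

Definition sep a b := g * C a < dist2 a b.

Lemma pack t L :
  ForallOrdPairs sep L -> (forall w, In w L -> dist2 t w <= g * C t) ->
  (length L <= 36)%nat.
Proof.
  intros HF Hin.
  set (h := g * (1 - g) * C t / 2).
  assert (Ct := Cpos t).
  assert (G1 : 0 < g * (1 - g)) by (apply Rmult_lt_0_compat; lra).
  assert (G2 : 0 < g * (1 - g) * C t) by (apply Rmult_lt_0_compat; lra).
  assert (hpos : 0 < h) by (unfold h; lra).
  set (ix := fun w : pt => Z.to_nat (up ((fst w - fst t) / h) + 2)).
  set (iy := fun w : pt => Z.to_nat (up ((snd w - snd t) / h) + 2)).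
  set (cell := fun w => (6 * ix w + iy w)%nat).
  assert (Rng : forall w, dist2 t w <= g * C t ->
    -3 < (fst w - fst t) / h < 3 /\ -3 < (snd w - snd t) / h < 3).
  { intros w Hw. pose proof (d2_sq t w). pose proof (d2_ge0 t w).
    assert (E3 : 3*h - g*C t = (g * C t) * ((1 - 3*g)/2)) by (unfold h; field).
    assert (0 < (g * C t) * ((1 - 3*g)/2)) by (apply Rmult_lt_0_compat; [apply Rmult_lt_0_compat|]; lra).
    assert (g * C t < 3 * h) by lra.
    assert (D1 : dist2 t w * dist2 t w < (3*h)*(3*h)).
    { apply Rle_lt_trans with ((g * C t) * (g * C t)).
      - apply Rmult_le_compat; lra.
      - apply Rmult_le_0_lt_compat; lra. }
    pose proof (pow2_ge_0 (fst t - fst w)); pose proof (pow2_ge_0 (snd t - snd w)).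
    assert (A1 : (fst w - fst t)^2 < (3*h)^2).
    { replace ((fst w - fst t)^2) with ((fst t - fst w)^2) by ring. simpl. lra. }
    assert (A2 : (snd w - snd t)^2 < (3*h)^2).
    { replace ((snd w - snd t)^2) with ((snd t - snd w)^2) by ring. simpl. lra. }
    assert (B1 : -3*h < fst w - fst t < 3*h) by nra.
    assert (B2 : -3*h < snd w - snd t < 3*h) by nra.
    split; split;
      [apply Rmult_lt_reg_r with h | apply Rmult_lt_reg_r with h |
       apply Rmult_lt_reg_r with h | apply Rmult_lt_reg_r with h]; auto;
      unfold Rdiv; rewrite Rmult_assoc, Rinv_l by lra; lra. }
  assert (Ix : forall w, dist2 t w <= g * C t -> (ix w < 6)%nat /\ (iy w < 6)%nat).
  { intros w Hw. destruct (Rng w Hw) as [R1 R2].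
    apply up_range in R1; apply up_range in R2. unfold ix, iy. lia. }
  assert (Inj : forall a b, dist2 t a <= g * C t -> dist2 t b <= g * C t ->
                 sep a b -> cell a <> cell b).
  { intros a b Ha Hb Hs Ec.
    destruct (Rng a Ha) as [Ra1 Ra2]. destruct (Rng b Hb) as [Rb1 Rb2].
    apply up_range in Ra1, Ra2, Rb1, Rb2.
    destruct (Ix a Ha); destruct (Ix b Hb).
    unfold cell in Ec.
    assert (Ex : ix a = ix b) by lia. assert (Ey : iy a = iy b) by lia.
    unfold ix, iy in Ex, Ey.
    assert (Ux : up ((fst a - fst t) / h) = up ((fst b - fst t) / h)) by lia.
    assert (Uy : up ((snd a - snd t) / h) = up ((snd b - snd t) / h)) by lia.
    apply up_close in Ux. apply up_close in Uy.
    assert (Qx : (fst a - fst t) / h - (fst b - fst t) / h = (fst a - fst b) / h)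
      by (field; lra).
    assert (Qy : (snd a - snd t) / h - (snd b - snd t) / h = (snd a - snd b) / h)
      by (field; lra).
    rewrite Qx in Ux; rewrite Qy in Uy.
    assert (Mx : (fst a - fst b) = (fst a - fst b) / h * h) by (field; lra).
    assert (My : (snd a - snd b) = (snd a - snd b) / h * h) by (field; lra).
    assert (Dx : -h < fst a - fst b < h) by (rewrite Mx; nra).
    assert (Dy : -h < snd a - snd b < h) by (rewrite My; nra).
    unfold sep in Hs.
    pose proof (Clip t a). rewrite (d2_sym a t) in H3.
    assert (Ca : (1 - g) * C t <= C a) by nra.
    assert (2 * h < dist2 a b) by (unfold h in *; nra).
    pose proof (d2_sq a b). nra. }
  assert (HF' : ForallOrdPairs (fun a b => cell a <> cell b) L).
  { apply (FOP_weaken (fun w => dist2 t w <= g * C t) sep); auto.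
    apply Forall_forall; auto. }
  apply nodup_map in HF'.
  assert (Hinc : incl (map cell L) (seq 0 36)).
  { intros x Hx. apply in_map_iff in Hx. destruct Hx as [w [<- Hw]].
    apply in_seq. destruct (Ix w (Hin w Hw)). unfold cell. lia. }
  pose proof (NoDup_incl_length HF' Hinc). rewrite length_map, length_seq in H. exact H.
Qed.

Lemma count Tstar : forall T,
  ForallOrdPairs sep T ->
  (forall w, In w T -> exists t, In t Tstar /\ dist2 t w <= g * C t) ->
  (length T <= 36 * length Tstar)%nat.
Proof.
  induction Tstar as [|t rest IH]; intros T HF Hc.
  - destruct T as [|w T]; simpl; [lia|].
    destruct (Hc w (or_introl eq_refl)) as [x [[] _]].
  - set (f := fun w => if Rle_dec (dist2 t w) (g * C t) then true else false).
    rewrite <- (filter_length f T).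
    assert (H1 : (length (filter f T) <= 36)%nat).
    { apply (pack t). apply FOP_filter; auto.
      intros w Hw. apply filter_In in Hw. destruct Hw as [_ Hw]. unfold f in Hw.
      destruct Rle_dec; auto; discriminate. }
    assert (H2 : (length (filter (fun x => negb (f x)) T) <= 36 * length rest)%nat).
    { apply IH. apply FOP_filter; auto.
      intros w Hw. apply filter_In in Hw. destruct Hw as [Hw Hf]. unfold f in Hf.
      destruct (Hc w Hw) as [t' [[<-|Ht'] Hd]].
      - destruct Rle_dec; simpl in Hf; [discriminate|contradiction].
      - eauto. }
    simpl. lia.
Qed.
End Pack.

Lemma greedy_props cov S T : greedy_run cov S T ->
  (forall z, In z T -> S z) /\ ForallOrdPairs (fun a b => ~ cov a b) T.
Proof.
  intro H; induction H as [S Hs|S z T Hz HT [IH1 IH2]].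
  - split; [intros z []|constructor].
  - split.
    + intros w [<-|Hw]; auto. apply IH1; auto.
    + constructor; auto. apply Forall_forall. intros x Hx. apply IH1; auto.
Qed.

Theorem mainTheorem12
  (n k : nat) (p : nat -> nat -> pt) (eps rho : R) (T : list pt) :
  (1 <= k)%nat ->
  (exists x0 : pt, (forall x : pt, cost n k p x0 <= cost n k p x) /\
                   0 < cost n k p x0) ->
  0 < eps <= 1 ->
  0 < rho ->
  greedy_run (covers n k p (gam eps)) (S_grid n k p eps rho) T ->
  forall Tstar : list pt,
    NoDup Tstar ->
    (forall s, S_grid n k p eps rho s ->
       exists t, In t Tstar /\ covers n k p (gam eps) t s) ->
    (length T <= 3540 * length Tstar)%nat.
Proof.
  intros _ [x0 [Hmin Hpos]] Heps _ Hg Tstar _ Hcov.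
  destruct (greedy_props _ _ _ Hg) as [HS HF].
  assert (Cpos : forall x, 0 < cost n k p x) by (intro x; specialize (Hmin x); lra).
  assert (gpos : 0 < gam eps <= 1/4).
  { unfold gam; split.
    - apply Rdiv_lt_0_compat; lra.
    - apply Rmult_le_reg_r with (2 * (1 + eps)); [lra|].
      unfold Rdiv; rewrite Rmult_assoc, Rinv_l by lra; lra. }
  assert (H := count (cost n k p) (gam eps) Cpos (cost_lip n k p) gpos Tstar T).
  assert (length T <= 36 * length Tstar)%nat.
  { apply H.
    - eapply FOP_weaken with (P := fun _ => True); [|apply Forall_forall; auto|exact HF].
      intros a b _ _ Hn. unfold sep. unfold covers in Hn. lra.
    - intros w Hw. destruct (Hcov w (HS w Hw)) as [t [Ht Hc]]. exists t; split; auto. }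
  lia.
Qed.
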